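(* For all integers $s\ge k\ge 3$ there is a constant $C=C(k,s)>0$ such that for every integer $n\ge 2$, $$ f_{s,s+1}^{(k)}(n)\le C(\log n)^{1/(k-2)}. $$ Equivalently, for every $n\ge 2$ there is a $K_{s+1}^{(k)}$-free $k$-uniform hypergraph on $n$ vertices in which every set of at least $C(\log n)^{1/(k-2)}$ vertices contains a copy of $K_s^{(k)}$.
   Context: For integers $k\le s<t$ and $n\ge 0$, $f_{s,t}^{(k)}(n)$ is defined as $$ f_{s,t}^{(k)}(n)=\min_{\mathcal{G}} \max\{ |W| : W\subseteq V(\mathcal{G}) \text{ and the induced subhypergraph } \mathcal{G}[W] \text{ contains no copy of } K_s^{(k)}\}, $$ where the minimum is over all $k$-uniform hypergraphs $\mathcal{G}$ on $n$ vertices containing no copy of $K_t^{(k)}$, and $K_r^{(k)}$ denotes the complete $k$-uniform hypergraph on $r$ vertices. All logarithms are natural logarithms. *)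

(* Defs.v *)
From mathcomp Require Import all_boot.
Set Implicit Arguments. Unset Strict Implicit. Unset Printing Implicit Defensive.

Definition kuniform (k n : nat) (G : {set {set 'I_n}}) : bool :=
  [forall e in G, #|e| == k].

Definition has_clique (k n : nat) (G : {set {set 'I_n}}) (t : nat)
  (W : {set 'I_n}) : bool :=
  [exists S : {set 'I_n}, (S \subset W) && (#|S| == t) &&
     [forall e : {set 'I_n}, ((e \subset S) && (#|e| == k)) ==> (e \in G)]].

(* f_{s,t}^{(k)}(n): min over K_t-free k-uniform G on n vertices of the
   largest W with G[W] K_s-free.  (The default value n of the min is never
   attained spuriously: the empty hypergraph is admissible and all values
   are <= n.) *)
Definition f_kst (k s t n : nat) : nat :=
  \big[minn/n]_(G : {set {set 'I_n}} | kuniform k G && ~~ has_clique k G t setT)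
     \max_(W : {set 'I_n} | ~~ has_clique k G s W) #|W|.

(* Main.v *)
Require Import Defs.
From mathcomp Require Import all_boot.
From Stdlib Require Import Reals.
From Stdlib Require Import Lra.
From mathcomp Require Import zify.

Module Aux.
Import ssrnat.
Local Set Implicit Arguments. Local Unset Strict Implicit.
Section Comb.
Variable n : nat.

Lemma lowset (T : {set 'I_n}) j : j <= #|T| ->
  exists A : {set 'I_n}, [/\ A \subset T, #|A| = j &
     forall a b, a \in A -> b \in T :\: A -> a < b].
Proof.
elim: j => [|j IH] hj.
  exists set0; split => //; [exact: sub0set | by rewrite cards0 | by move=> a b; rewrite in_set0].
have [A [sAT cA hA]] := IH (ltnW hj).
have hne : (0 < #|T :\: A|) by rewrite cardsD (setIidPr sAT) cA; lia.
have [b0 hb0] : exists b0, b0 \in T :\: A by apply/set0Pn; rewrite -card_gt0.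
pose P := fun m => [exists b in T :\: A, val b == m].
have exP : exists m, P m by exists (val b0); apply/existsP; exists b0; rewrite hb0 eqxx.
case: (ex_minnP exP) => m /existsP [bm /andP [hbm /eqP ebm]] hmin.
exists (bm |: A); split.
- rewrite subUset sub1set; move: hbm; rewrite in_setD => /andP [_ ->]; by rewrite sAT.
- by rewrite cardsU1; move: hbm; rewrite in_setD => /andP [-> _]; rewrite cA.
- move=> a b; rewrite in_setU1 => /orP [/eqP -> | ha].
  + rewrite in_setD in_setU1 negb_or => /andP [/andP [hb1 hb2] hb3].
    have : m <= val b by apply: hmin; apply/existsP; exists b; rewrite in_setD hb2 hb3 eqxx.
    rewrite -ebm leq_eqVlt => /orP [/eqP e|//].
    by move: hb1; rewrite -(inj_eq val_inj) e eqxx.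
  + rewrite in_setD in_setU1 negb_or => /andP [/andP [_ hb2] hb3].
    by apply: hA => //; rewrite in_setD hb2 hb3.
Qed.
End Comb.
Lemma card_bigcup_le (I T : finType) (P : pred I) (F : I -> {set T}) :
  #|\bigcup_(i | P i) F i| <= \sum_(i | P i) #|F i|.
Proof.
apply: (big_ind2 (fun (A : {set T}) m => #|A| <= m)) => //; first by rewrite cards0.
move=> A1 m1 A2 m2 h1 h2; apply: leq_trans (leq_card_setU A1 A2).1 _; exact: leq_add.
Qed.

Lemma leq_expb m n e : m <= n -> m ^ e <= n ^ e.
Proof. move=> h; elim: e => [|e IH] //; rewrite !expnS; exact: leq_mul. Qed.

Lemma ffact_le_exp M j : M ^_ j <= M ^ j.
Proof.
elim: j M => [|j IH] M; first by [].
rewrite ffactnS expnS; apply: leq_mul => //.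
apply: leq_trans (IH _) _; apply: leq_expb; exact: leq_pred.
Qed.

Lemma bin_le_exp M j : 'C(M, j) <= M ^ j.
Proof.
apply: leq_trans (ffact_le_exp M j); rewrite -bin_ffact; apply: leq_pmulr; exact: fact_gt0.
Qed.

Lemma exp_le_ffact j a M : a + j <= M.+1 -> a ^ j <= M ^_ j.
Proof.
elim: j a M => [|j IH] a M h; first by [].
rewrite ffactnS expnS; case: M h => [|M] h.
  have -> : a = 0 by lia. by [].
apply: leq_mul; first by lia.
apply: IH; rewrite /=; lia.
Qed.

Lemma exp_le_bin s M : 0 < s -> s <= M -> M ^ s <= s`! * s ^ s * 'C(M, s).
Proof.
move=> s0 sM.
have h1 : M ^ s <= (s * (M - s).+1) ^ s by apply: leq_expb; nia.
apply: leq_trans h1 _; rewrite expnMn [s`! * _]mulnC -mulnA; apply: leq_mul => //.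
rewrite mulnC bin_ffact; apply: exp_le_ffact; lia.
Qed.

Lemma indep_step (I C : finType) (c0 : C) (D : {set I}) (c : {ffun I -> C})
  (Q : pred {ffun I -> C}) :
  (forall chi chi' : {ffun I -> C}, (forall i, i \notin D -> chi i = chi' i) -> Q chi = Q chi') ->
  #|[set chi | Q chi]| <= #|C| ^ #|D| * #|[set chi | Q chi && [forall i in D, chi i == c i]]|.
Proof.
move=> hQ.
pose restr (chi : {ffun I -> C}) : {ffun I -> C} := [ffun i => if i \in D then chi i else c0].
pose ovw (chi : {ffun I -> C}) : {ffun I -> C} := [ffun i => if i \in D then c i else chi i].
pose Bc := [set chi | Q chi && [forall i in D, chi i == c i]].
have hPF : forall chi, Q chi -> restr chi \in pffun_on c0 D C.
  move=> chi _; apply/pffun_onP; split.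
    apply/subsetP => i; rewrite inE /restr ffunE; case: (i \in D) => //; by rewrite eqxx.
  by move=> y _.
rewrite -sum1dep_card (partition_big restr _ hPF).
rewrite -(card_pffun_on c0 D C) -sum_nat_const; apply: leq_sum => p _.
rewrite sum1dep_card.
set Sp := [set chi | Q chi && (restr chi == p)].
have inj : {in Sp &, injective ovw}.
  move=> x y; rewrite !inE => /andP [_ /eqP hx] /andP [_ /eqP hy] he.
  apply/ffunP => i; case: (boolP (i \in D)) => hi.
    have := congr1 (fun f : {ffun I -> C} => f i) hx; have := congr1 (fun f : {ffun I -> C} => f i) hy.
    by rewrite /= /restr !ffunE hi => -> ->.
  by have := congr1 (fun f : {ffun I -> C} => f i) he; rewrite /= !ffunE (negbTE hi).
rewrite -(card_in_imset inj); apply: subset_leq_card; apply/subsetP => y /imsetP [x hx ->].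
move: hx; rewrite /Sp inE => /andP [qx _].
rewrite inE; apply/andP; split.
  by rewrite -(hQ x) // => i hi; rewrite /ovw ffunE (negbTE hi).
by apply/forallP => i; apply/implyP => hi; rewrite /ovw ffunE hi.
Qed.

Lemma bigmin_seq (T : eqType) (P : pred T) (F : T -> nat) d i0 (rr : seq T) :
  i0 \in rr -> P i0 -> \big[minn/d]_(i <- rr | P i) F i <= F i0.
Proof.
elim: rr => // a rr IH; rewrite in_cons big_cons => /orP [/eqP <-|h] hp.
  by rewrite hp geq_minl.
case: (P a); last exact: IH.
apply: leq_trans (geq_minr _ _) _; exact: IH.
Qed.

Lemma bigmin_le_term (T : finType) (P : pred T) (F : T -> nat) d i0 :
  P i0 -> \big[minn/d]_(i | P i) F i <= F i0.
Proof. by move=> hp; apply: bigmin_seq => //; rewrite mem_index_enum. Qed.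

Lemma bern y j : y ^ j.+1 + j.+1 * y ^ j <= y.+1 ^ j.+1.
Proof.
elim: j => [|j IH]; first by rewrite !expn1 !expn0; lia.
rewrite (expnS y.+1) (expnS y j.+1).
have h := leq_mul (leqnn y.+1) IH.
apply: leq_trans h; rewrite (expnS y j). nia.
Qed.

Lemma pow_bern x : 0 < x -> (x - 1) ^ x * 2 <= x ^ x.
Proof.
case: x => // y _; rewrite subn1 /=.
apply: leq_trans (bern y y); rewrite expnS. nia.
Qed.
Lemma INR_expn (m n : nat) : INR (m ^ n) = (INR m ^ n)%R.
Proof. elim: n => [|n IH] //=. by rewrite expnS mult_INR IH. Qed.

Lemma ln2_half : (1/2 < ln 2)%R.
Proof.
have h1 : (exp (1/2) * exp (1/2) = exp 1)%R by rewrite -exp_plus; f_equal; lra.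
have h2 := exp_le_3. have h3 : (0 < exp (1/2))%R by apply: exp_pos.
have h4 : (exp (1/2) < 2)%R by nra.
rewrite -[X in (X < _)%R](ln_exp (1/2)). by apply: ln_increasing.
Qed.

Lemma ln_ge_log2 (n l : nat) : 2 ^ l <= n -> (INR l * ln 2 <= ln (INR n))%R.
Proof.
move=> h. have hp : (0 < INR (2 ^ l))%R by apply: lt_0_INR; apply/ltP; rewrite expn_gt0.
have hle : (INR (2 ^ l) <= INR n)%R by apply: le_INR; apply/leP.
rewrite INR_expn in hp hle.
rewrite -ln_pow; last lra.
case: (Rle_lt_or_eq_dec _ _ hle) => [lt|->]; last lra.
apply: Rlt_le; apply: ln_increasing => //.
Qed.

Lemma root_bound (a d : nat) (B : R) : 0 < d -> (0 < B)%R ->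
  (INR a ^ d <= B)%R -> (INR a <= Rpower B (1 / INR d))%R.
Proof.
move=> hd hB h.
case: (posnP a) => [->|ha].
  rewrite /Rpower /=; apply: Rlt_le; apply: exp_pos.
have hA : (0 < INR a)%R by apply: lt_0_INR; apply/ltP.
have hdR : (0 < INR d)%R by apply: lt_0_INR; apply/ltP.
have -> : INR a = Rpower (INR a ^ d) (1 / INR d).
  rewrite -Rpower_pow // Rpower_mult.
  have -> : (INR d * (1 / INR d) = 1)%R by field; lra.
  by rewrite Rpower_1.
apply: Rle_Rpower_l.
  apply: Rlt_le; apply: Rdiv_lt_0_compat; lra.
split => //. by apply: pow_lt.
Qed.

Lemma final_real (d B K : nat) : 0 < d ->
  exists C : R, (0 < C)%R /\ forall (n l f a : nat), 2 <= n -> 2 ^ l <= n -> f <= a ->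
    a ^ d <= B + K * l.+1 ->
    (INR f <= C * Rpower (ln (INR n)) (1 / INR d))%R.
Proof.
move=> hd.
set Cs := (INR (2 * B + 4 * K) + 1)%R.
have hCs : (0 < Cs)%R by rewrite /Cs; have := pos_INR (2 * B + 4 * K); lra.
exists (Rpower Cs (1 / INR d)); split; first by rewrite /Rpower; apply: exp_pos.
move=> n l f a hn hl hfa ha.
have ln2 := ln2_half.
have hln : (ln 2 <= ln (INR n))%R.
  have := @ln_ge_log2 n 1; rewrite expn1 => /(_ hn) /=; rewrite Rmult_1_l; lra.
have hll := @ln_ge_log2 n l hl.
have hl0 := pos_INR l.
have hlb : (INR l <= 2 * ln (INR n))%R.
  have : (INR l * (1/2) <= INR l * ln 2)%R by apply: Rmult_le_compat_l; lra.
  lra.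
have hlnpos : (0 < ln (INR n))%R by lra.
rewrite Rpower_mult_distr //.
apply: (Rle_trans _ (INR a)); first by apply: le_INR; apply/leP.
apply: root_bound => //; first by apply: Rmult_lt_0_compat.
have h1 : (INR a ^ d <= INR B + INR K * (INR l + 1))%R.
  rewrite -INR_expn -S_INR -mult_INR -plus_INR; apply: le_INR; apply/leP; exact: ha.
apply: Rle_trans h1 _.
rewrite /Cs (_ : 2 * B + 4 * K = plus (mult 2 B) (mult 4 K))%N // plus_INR !mult_INR.
have hB := pos_INR B; have hK := pos_INR K.
have e2 : INR 2 = 2%R by []. have e4 : INR 4 = 4%R by rewrite /= ; lra.
rewrite e2 e4.
have p1 : (0 <= INR B * (2 * ln (INR n) - 1))%R by apply: Rmult_le_pos; lra.
have p2 : (0 <= INR K * (4 * ln (INR n) - INR l - 1))%R by apply: Rmult_le_pos; lra.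
nra.
Qed.
Section Graph.
Variables (n k s : nat).
Hypothesis hk : 3 <= k.
Hypothesis hks : k <= s.
Local Notation r := (s - k).+2.
Local Notation col := {ffun {set 'I_n} -> 'I_r}.

Definition edge_rule (chi : col) (e : {set 'I_n}) : bool :=
  [forall x in e, forall y in e,
     ((x != y) && [forall z in e, (z == x) || (z == y) || ((z < x) && (z < y))])
       ==> (chi (e :\ x) != chi (e :\ y))].

Definition Gr (chi : col) : {set {set 'I_n}} :=
  [set e : {set 'I_n} | (#|e| == k) && edge_rule chi e].

Lemma Gr_unif chi : kuniform k (Gr chi).
Proof. by apply/forallP => e; apply/implyP; rewrite /Gr in_set => /andP []. Qed.

Lemma Gr_free chi : ~~ has_clique k (Gr chi) s.+1 setT.
Proof.
apply/negP => /existsP [T /andP [/andP [_ /eqP hT] /forallP hall]].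
have [A [sAT cA hA]] := @lowset n T (k - 2) ltac:(rewrite hT; lia).
pose B := T :\: A.
have cB : #|B| = s.+1 - (k - 2) by rewrite cardsD (setIidPr sAT) hT cA.
pose fc := fun b => chi (b |: A).
have [b1 [b2 [hb1 hb2 hne he]]] : exists b1 b2, [/\ b1 \in B, b2 \in B, b1 != b2 & fc b1 = fc b2].
  case: (boolP [exists b1 in B, exists b2 in B, (b1 != b2) && (fc b1 == fc b2)]).
    move=> /existsP [b1 /andP [h1 /existsP [b2 /andP [h2 /andP [h3 /eqP h4]]]]].
    by exists b1, b2.
  move=> hno.
  have inj : {in B &, injective fc}.
    move=> x y hx hy hxy; apply/eqP; apply: contraR hno => hxy'.
    by apply/existsP; exists x; rewrite hx; apply/existsP; exists y; rewrite hy hxy' hxy eqxx.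
  have := card_in_imset inj. have := max_card (fc @: B). rewrite card_ord cB => h1 h2. lia.
move: hb1 hb2; rewrite !in_setD => /andP [nb1 tb1] /andP [nb2 tb2].
pose e := b1 |: (b2 |: A).
have he1 : e :\ b1 = b2 |: A by rewrite setU1K // in_setU1 negb_or hne nb1.
have he2 : e :\ b2 = b1 |: A.
  by rewrite /e setUCA setU1K // in_setU1 negb_or eq_sym hne nb2.
have heG : e \in Gr chi.
  apply: (implyP (hall e)); rewrite /e !subUset !sub1set tb1 tb2 sAT /=.
  rewrite !cardsU1 nb2 in_setU1 negb_or hne nb1 cA /=; apply/eqP; lia.
move: heG; rewrite /Gr in_set => /andP [_ /forallP /(_ b1)].
rewrite in_setU1 eqxx /= => /forallP /(_ b2); rewrite !in_setU1 eqxx orbT /=.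
rewrite hne he1 he2 /=.
have -> : [forall z in e, (z == b1) || (z == b2) || ((z < b1) && (z < b2))].
  apply/forallP => z; apply/implyP; rewrite !in_setU1.
  case/or3P => [-> //|-> //|hz]; first by rewrite orbT.
  by rewrite (hA _ _ hz) ?(hA _ _ hz) ?orbT // in_setD ?nb1 ?nb2 ?tb1 ?tb2.
by rewrite /fc in he; rewrite he eqxx.
Qed.


Definition Uset (S f : {set 'I_n}) : {set 'I_n} :=
  [set z in S :\: f | [exists y in f, z < y]].

Definition cpat (S : {set 'I_n}) : col := [ffun f => inord #|Uset S f|].

Definition Dsh (S : {set 'I_n}) : {set {set 'I_n}} :=
  [set f : {set 'I_n} | (f \subset S) && (#|f| == k.-1)].

Definition Rev (S : {set 'I_n}) (chi : col) : bool :=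
  [forall f in Dsh S, chi f == cpat S f].

Lemma Uset_proper (S e : {set 'I_n}) (x y : 'I_n) : e \subset S -> x \in e -> y \in e -> x < y ->
  (forall z, z \in e -> (z == x) || (z == y) || ((z < x) && (z < y))) ->
  Uset S (e :\ y) \proper Uset S (e :\ x).
Proof.
move=> sES xe ye lxy hz.
have nxy : x != y by rewrite neq_ltn lxy.
apply/properP; split.
- apply/subsetP => z; rewrite /Uset !inE => /andP [/andP [nz zS] /existsP [w /andP [hw zw]]].
  move: hw; rewrite !inE => /andP [wy we].
  have zx : z < x.
    move: (hz w we); rewrite (negbTE wy) orbF => /orP [/eqP <- //|/andP [wx _]].
    exact: ltn_trans zw wx.
  have zy : z < y by exact: ltn_trans zx lxy.
  rewrite zS andbT; apply/andP; split.
    have zyne : (z == y) = false by apply/negbTE; apply: contraTneq zy => ->; rewrite ltnn.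
    move: nz; rewrite negb_and negbK zyne /= => nze.
    by rewrite (negbTE nze) andbF.
  apply/existsP; exists y; rewrite !inE eq_sym nxy ye /=; exact: zy.
- exists x.
    rewrite /Uset !inE eqxx /= (subsetP sES _ xe) /=.
    by apply/existsP; exists y; rewrite !inE eq_sym nxy ye.
  by rewrite /Uset !inE nxy xe.
Qed.


Lemma Uset_card (S f : {set 'I_n}) : #|S| = s -> f \subset S -> #|f| = k.-1 -> #|Uset S f| <= s - k + 1.
Proof.
move=> cS sfS cf.
have : #|Uset S f| <= #|S :\: f|.
  by apply: subset_leq_card; apply/subsetP => z; rewrite /Uset in_set => /andP [].
rewrite cardsD (setIidPr sfS) cS cf. lia.
Qed.

Lemma Rev_clique (S : {set 'I_n}) chi (e : {set 'I_n}) : #|S| = s -> Rev S chi -> e \subset S -> #|e| = k -> e \in Gr chi.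
Proof.
move=> cS hR sES cE.
rewrite /Gr in_set cE eqxx /=.
have hD : forall x, x \in e -> chi (e :\ x) = cpat S (e :\ x).
  move=> x xe; apply/eqP; apply: (implyP (forallP hR (e :\ x))).
  rewrite /Dsh in_set; apply/andP; split.
    by apply: subset_trans sES; apply/subsetP => z; rewrite in_setD1 => /andP [].
  by move: cE; rewrite (cardsD1 x) xe => <-.
have hcard : forall x, x \in e -> nat_of_ord (cpat S (e :\ x)) = #|Uset S (e :\ x)|.
  move=> x xe; rewrite ffunE inordK //.
  have := @Uset_card S (e :\ x) cS.
  have -> : #|e :\ x| = k.-1 by move: cE; rewrite (cardsD1 x) xe => <-.
  have sub : e :\ x \subset S.
    by apply: subset_trans sES; apply/subsetP => z; rewrite in_setD1 => /andP [].
  move=> /(_ sub erefl) h; lia.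
apply/forallP => x; apply/implyP => xe; apply/forallP => y; apply/implyP => ye.
apply/implyP => /andP [nxy /forallP hz].
have hz' : forall z, z \in e -> (z == x) || (z == y) || ((z < x) && (z < y)).
  by move=> z ze; apply: (implyP (hz z)).
rewrite (hD x xe) (hD y ye); apply/negP => /eqP /(congr1 (@nat_of_ord _)).
rewrite (hcard x xe) (hcard y ye).
case: (ltngtP x y) => [lxy|lyx|exy].
- by move=> h; have := proper_card (Uset_proper sES xe ye lxy hz'); rewrite h ltnn.
- have hz2 : forall z, z \in e -> (z == y) || (z == x) || ((z < y) && (z < x)).
    by move=> z /hz'; rewrite (orbC (z == x)) (andbC (z < x)).
  by move=> h; have := proper_card (Uset_proper sES ye xe lyx hz2); rewrite h ltnn.
- by move: nxy; rewrite (val_inj exy) eqxx.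
Qed.

Lemma Rev_has (S W : {set 'I_n}) chi : S \subset W -> #|S| = s -> Rev S chi -> has_clique k (Gr chi) s W.
Proof.
move=> sSW cS hR; apply/existsP; exists S; rewrite sSW cS eqxx /=.
apply/forallP => e; apply/implyP => /andP [sES /eqP cE].
exact: (Rev_clique cS hR sES cE).
Qed.


Definition packing (W : {set 'I_n}) (P : {set {set 'I_n}}) : bool :=
  [forall S in P, (S \subset W) && (#|S| == s)] &&
  [forall S in P, forall S' in P, (S != S') ==> (#|S :&: S'| < k.-1)].

Lemma packing0 (W : {set 'I_n}) : packing W set0.
Proof. by apply/andP; split; apply/forallP => S; rewrite inE. Qed.

Definition Pmax (W : {set 'I_n}) : {set {set 'I_n}} :=
  [arg max_(P > set0 | packing W P) #|P|].

Lemma Pmax_spec (W : {set 'I_n}) : packing W (Pmax W) /\ forall P, packing W P -> #|P| <= #|Pmax W|.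
Proof. rewrite /Pmax; case: arg_maxnP => [|P hP hmax]; [exact: packing0 | by split]. Qed.

Lemma Pmax_max (W S : {set 'I_n}) : S \subset W -> #|S| = s ->
  exists2 S0, S0 \in Pmax W & k.-1 <= #|S :&: S0|.
Proof.
move=> sSW cS; have [hP hmax] := Pmax_spec W; set P := Pmax W in hP hmax *.
case: (boolP [exists S0 in P, k.-1 <= #|S :&: S0|]).
  by move=> /existsP [S0 /andP [h1 h2]]; exists S0.
move=> hno.
have hno' : forall S0, S0 \in P -> #|S :&: S0| < k.-1.
  move=> S0 h0; rewrite ltnNge; apply: contra hno => h; apply/existsP; exists S0; by rewrite h0.
have nSP : S \notin P.
  apply/negP => hS; have := hno' S hS; rewrite setIid cS; lia.
have : packing W (S |: P).
  move: hP => /andP [/forallP h1 /forallP h2].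
  apply/andP; split; apply/forallP => S1; apply/implyP; rewrite in_setU1 => /orP [/eqP -> | hS1].
  - by rewrite sSW cS eqxx.
  - exact: (implyP (h1 S1) hS1).
  - apply/forallP => S2; apply/implyP; rewrite in_setU1 => /orP [/eqP -> | hS2]; first by rewrite eqxx.
    by apply/implyP => _; apply: hno'.
  - apply/forallP => S2; apply/implyP; rewrite in_setU1 => /orP [/eqP -> | hS2].
      by apply/implyP => _; rewrite setIC; apply: hno'.
    exact: (implyP (forallP (implyP (h2 S1) hS1) S2) hS2).
move=> /hmax; rewrite cardsU1 nSP; lia.
Qed.

Lemma Pmax_big (W : {set 'I_n}) M : #|W| = M -> s <= M ->
  M ^ k.-1 <= #|Pmax W| * ('C(s, k.-1) * s`! * s ^ s).
Proof.
move=> cW sM.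
have [hP _] := Pmax_spec W; set P := Pmax W in hP *.
move: hP => /andP [/forallP hP1 _].
pose E := fun A : {set 'I_n} => [set S : {set 'I_n} | [&& S \subset W, #|S| == s & A \subset S]].
pose Ss := [set S : {set 'I_n} | S \subset W & #|S| == s].
have cSs : #|Ss| = 'C(M, s) by rewrite cards_draws cW.
have hE : forall A : {set 'I_n}, #|A| = k.-1 -> #|E A| <= 'C(M, s - k.-1).
  move=> A cA.
  have inj : {in E A &, injective (fun S => S :\: A)}.
    move=> S1 S2; rewrite !inE => /and3P [_ _ h1] /and3P [_ _ h2] he.
    apply/setP => z; case: (boolP (z \in A)) => hz.
      by rewrite (subsetP h1 _ hz) (subsetP h2 _ hz).
    by move/setP: he => /(_ z); rewrite !inE hz.
  rewrite -(card_in_imset inj) -cW -cards_draws; apply: subset_leq_card.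
  apply/subsetP => U /imsetP [S hS ->]; move: hS; rewrite /E inE => /and3P [h1 /eqP h2 h3].
  rewrite inE; apply/andP; split.
    by apply: subset_trans h1; apply/subsetP => z; rewrite inE => /andP [].
  by rewrite cardsD (setIidPr h3) h2 cA.
have hsub : Ss \subset \bigcup_(S0 in P) \bigcup_(A in Dsh S0) E A.
  apply/subsetP => S; rewrite inE => /andP [sSW /eqP cS].
  have [S0 hS0 hc] := Pmax_max sSW cS.
  have : 0 < #|[set A : {set 'I_n} | A \subset S :&: S0 & #|A| == k.-1]|.
    by rewrite cards_draws bin_gt0.
  move=> /card_gt0P [A]; rewrite inE => /andP [hA /eqP cA].
  apply/bigcupP; exists S0 => //; apply/bigcupP; exists A.
    rewrite /Dsh inE cA eqxx andbT; apply: subset_trans hA _; exact: subsetIr.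
  rewrite inE sSW cS eqxx /=; apply: subset_trans hA _; exact: subsetIl.
have h1 : 'C(M, s) <= #|P| * ('C(s, k.-1) * 'C(M, s - k.-1)).
  rewrite -cSs; apply: leq_trans (subset_leq_card hsub) _.
  apply: leq_trans (card_bigcup_le _ _) _.
  rewrite -sum_nat_const; apply: leq_sum => S0 hS0.
  apply: leq_trans (card_bigcup_le _ _) _.
  have cS0 : #|S0| = s by move: (implyP (hP1 S0) hS0) => /andP [_ /eqP].
  have -> : 'C(s, k.-1) = #|Dsh S0| by rewrite /Dsh cards_draws cS0.
  rewrite -sum_nat_const; apply: leq_sum => A; rewrite /Dsh inE => /andP [_ /eqP cA].
  exact: hE.
have s0 : 0 < s by lia.
have h2 := exp_le_bin s0 sM.
have h3 := bin_le_exp M (s - k.-1).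
have eM : M ^ s = M ^ k.-1 * M ^ (s - k.-1) by rewrite -expnD subnKC //; lia.
have Mpos : 0 < M ^ (s - k.-1) by rewrite expn_gt0; apply/orP; left; lia.
rewrite -(leq_pmul2r Mpos) -eM.
apply: leq_trans h2 _.
have h4 := leq_mul (leqnn (s`! * s ^ s)) (leq_trans h1 (leq_mul (leqnn #|P|) (leq_mul (leqnn 'C(s, k.-1)) h3))).
apply: leq_trans h4 _.
rewrite !mulnA. nia.
Qed.

Lemma Dsh_card (S : {set 'I_n}) : #|S| = s -> #|Dsh S| = 'C(s, k.-1).
Proof. by move=> cS; rewrite /Dsh cards_draws cS. Qed.

Lemma fam_bound m (P : {set {set 'I_n}}) : #|P| = m ->
  (forall S, S \in P -> #|S| = s) ->
  (forall S S', S \in P -> S' \in P -> S != S' -> #|S :&: S'| < k.-1) ->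
  #|[set chi : col | [forall S in P, ~~ Rev S chi]]| * (r ^ 'C(s, k.-1)) ^ m
    <= (r ^ 'C(s, k.-1) - 1) ^ m * #|{: col}|.
Proof.
set x := r ^ 'C(s, k.-1).
elim: m P => [|m IH] P cP hS hI.
  by rewrite !expn0 muln1 mul1n; apply: max_card.
have [S0 hS0] : exists S0, S0 \in P by apply/card_gt0P; rewrite cP.
pose P' := P :\ S0.
have cP' : #|P'| = m by move: cP; rewrite (cardsD1 S0) hS0 add1n => [[]].
have IH' := IH P' cP'
  (fun S h => hS S (subsetP (subD1set P S0) S h))
  (fun S S' h h' => hI S S' (subsetP (subD1set P S0) S h) (subsetP (subD1set P S0) S' h')).
pose Q := fun chi : col => [forall S in P', ~~ Rev S chi].
have hQ : forall chi chi' : col, (forall f, f \notin Dsh S0 -> chi f = chi' f) -> Q chi = Q chi'.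
  move=> chi chi' hf; apply: eq_forallb => S; case: (boolP (S \in P')) => //= hSP.
  congr negb; apply: eq_forallb => f; case: (boolP (f \in Dsh S)) => //= hf'.
  rewrite hf //; apply/negP => hf0.
  move: hSP; rewrite /P' in_setD1 => /andP [nSS0 hSP].
  have := hI S S0 hSP hS0 nSS0.
  move: hf' hf0; rewrite /Dsh !inE => /andP [fS /eqP cf] /andP [fS0 _].
  have : #|f| <= #|S :&: S0| by apply: subset_leq_card; rewrite subsetI fS fS0.
  rewrite cf; lia.
have step := @indep_step _ _ ord0 (Dsh S0) (cpat S0) Q hQ.
rewrite card_ord (Dsh_card (hS S0 hS0)) -/x in step.
have eqA : [set chi : col | [forall S in P, ~~ Rev S chi]] = [set chi | Q chi && ~~ Rev S0 chi].
  apply/setP => chi; rewrite !inE.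
  apply/forallP/andP => [h|[h1 h2] S].
    split; last exact: (implyP (h S0) hS0).
    by apply/forallP => S; apply/implyP => hSP; apply: (implyP (h S)); move: hSP; rewrite /P' in_setD1 => /andP [].
  apply/implyP => hSP; case: (eqVneq S S0) => [-> //|ne].
  by apply: (implyP (forallP h1 S)); rewrite /P' in_setD1 ne.
have split_card : #|[set chi | Q chi && ~~ Rev S0 chi]| + #|[set chi | Q chi && Rev S0 chi]| = #|[set chi | Q chi]|.
  rewrite -(cardsID [set chi | Rev S0 chi] [set chi | Q chi]) addnC.
  have e1 : #|[set chi | Q chi] :&: [set chi | Rev S0 chi]| = #|[set chi | Q chi && Rev S0 chi]|.
    by apply: eq_card => chi; rewrite !inE.
  have e2 : #|[set chi | Q chi] :\: [set chi | Rev S0 chi]| = #|[set chi | Q chi && ~~ Rev S0 chi]|.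
    by apply: eq_card => chi; rewrite !inE andbC.
  by rewrite e1 e2.
have step' : #|[set chi | Q chi]| <= x * #|[set chi | Q chi && Rev S0 chi]| by exact: step.
clear step; rewrite eqA.
set a := #|[set chi | Q chi && ~~ Rev S0 chi]| in split_card *.
set b := #|[set chi | Q chi && Rev S0 chi]| in split_card step'.
set q := #|[set chi | Q chi]| in split_card step' IH'.
have x1 : 0 < x by rewrite expn_gt0.
have hax : a * x <= q * (x - 1) by nia.
have h1 := leq_mul hax (leqnn (x ^ m)).
have h2 := leq_mul (leqnn (x - 1)) IH'.
rewrite !expnS.
set X := x ^ m in h1 h2 *; set Y := (x - 1) ^ m in h2 *.
set T := #|{: col}| in h2 *.
rewrite -mulnA mulnA; apply: leq_trans h2.
apply: leq_trans h1 _; by rewrite (mulnC q) -mulnA.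
Qed.

Lemma has_clique_mono G (W1 W2 : {set 'I_n}) : W1 \subset W2 ->
  has_clique k G s W1 -> has_clique k G s W2.
Proof.
move=> h /existsP [S /andP [/andP [h1 h2] h3]]; apply/existsP; exists S.
by rewrite (subset_trans h1 h) h2 h3.
Qed.

Lemma good_col M l : s <= M ->
  'C(s, k.-1) * s`! * s ^ s * (r ^ 'C(s, k.-1)) * l.+1 <= M ^ (k - 2) ->
  n < 2 ^ l.+1 ->
  exists chi : col, forall W : {set 'I_n}, #|W| = M -> has_clique k (Gr chi) s W.
Proof.
move=> sM hM hn.
set cst := 'C(s, k.-1) * s`! * s ^ s in hM.
set x := r ^ 'C(s, k.-1) in hM.
have x1 : 0 < x by rewrite expn_gt0.
have x2 : 1 < x.
  rewrite /x; have : 0 < 'C(s, k.-1) by rewrite bin_gt0; lia.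
  case: ('C(s, k.-1)) => // c _; rewrite expnS.
  have : 0 < r ^ c by rewrite expn_gt0.
  nia.
have cst0 : 0 < cst by rewrite /cst !muln_gt0 bin_gt0 fact_gt0 expn_gt0; apply/andP; split; [lia|lia].
set j := l.+1 * M.
set T0 := x * j.
pose Bad := [set chi : col | [exists W : {set 'I_n}, (#|W| == M) && ~~ has_clique k (Gr chi) s W]].
pose BadW := fun W : {set 'I_n} => [set chi : col | [forall S in Pmax W, ~~ Rev S chi]].
have hsub : Bad \subset \bigcup_(W : {set 'I_n} | #|W| == M) BadW W.
  apply/subsetP => chi; rewrite inE => /existsP [W /andP [hW hnc]].
  apply/bigcupP; exists W => //; rewrite inE; apply/forallP => S; apply/implyP => hS.
  apply: contra hnc => hR.
  have [hP _] := Pmax_spec W.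
  move: hP => /andP [/forallP hP1 _]; move: (implyP (hP1 S) hS) => /andP [sSW /eqP cS].
  exact: (Rev_has sSW cS hR).
have hW : forall W : {set 'I_n}, #|W| = M -> #|BadW W| * x ^ T0 <= (x - 1) ^ T0 * #|{: col}|.
  move=> W cW.
  have [hP _] := Pmax_spec W.
  move: hP => /andP [/forallP hP1 /forallP hP2].
  have hS : forall S, S \in Pmax W -> #|S| = s.
    by move=> S hS; move: (implyP (hP1 S) hS) => /andP [_ /eqP].
  have hI : forall S S', S \in Pmax W -> S' \in Pmax W -> S != S' -> #|S :&: S'| < k.-1.
    by move=> S S' h h' ne; exact: (implyP (implyP (forallP (implyP (hP2 S) h) S') h') ne).
  have fb := @fam_bound #|Pmax W| (Pmax W) erefl hS hI.
  have big := Pmax_big cW sM.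
  have hT0 : T0 <= #|Pmax W|.
    have e1 : M ^ k.-1 = M * M ^ (k - 2) by rewrite -expnS; congr (_ ^ _); lia.
    rewrite e1 in big.
    have : cst * T0 <= cst * #|Pmax W|.
      apply: leq_trans (_ : M * (cst * x * l.+1) <= _); first by rewrite /T0 /j; nia.
      apply: leq_trans (leq_mul (leqnn M) hM) _; apply: leq_trans big _; by rewrite /cst mulnC.
    by rewrite leq_pmul2l.
  move: fb; rewrite -(subnKC hT0) !expnD.
  set e := #|Pmax W| - T0.
  move=> fb.
  have hxe : 0 < x ^ e by rewrite expn_gt0 x1.
  rewrite -(leq_pmul2r hxe).
  apply: leq_trans (_ : #|BadW W| * (x ^ T0 * x ^ e) <= _); first by rewrite mulnA.
  apply: leq_trans fb _.
  rewrite -/x -mulnA [_ ^ e * _]mulnC mulnA; apply: leq_mul => //.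
  apply: leq_expb; lia.
have hBad : #|Bad| * x ^ T0 <= 'C(n, M) * ((x - 1) ^ T0 * #|{: col}|).
  apply: leq_trans (leq_mul (subset_leq_card hsub) (leqnn _)) _.
  apply: leq_trans (leq_mul (card_bigcup_le _ _) (leqnn _)) _.
  rewrite big_distrl /=.
  have -> : 'C(n, M) = #|[set W : {set 'I_n} | #|W| == M]| by rewrite card_draws card_ord.
  rewrite -sum_nat_const.
  rewrite [X in _ <= X](eq_bigl (fun W : {set 'I_n} => #|W| == M)); last by move=> W; rewrite inE.
  apply: leq_sum => W hW'.
  apply: hW; exact/eqP.
have hCn : 'C(n, M) < 2 ^ j.
  apply: leq_ltn_trans (bin_le_exp n M) _.
  rewrite /j expnM ltn_exp2r; [exact: hn | lia].
have hpow : (x - 1) ^ T0 * 2 ^ j <= x ^ T0.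
  rewrite /T0 (expnM (x - 1)) (expnM x) -expnMn; apply: leq_expb; exact: pow_bern.
have tot0 : 0 < #|{: col}| by apply/card_gt0P; exists [ffun _ => ord0].
have hx0 : 0 < (x - 1) ^ T0 by rewrite expn_gt0; apply/orP; left; lia.
have hlt : #|Bad| * x ^ T0 < #|{: col}| * x ^ T0.
  apply: leq_ltn_trans hBad _.
  apply: leq_trans (_ : 2 ^ j * ((x - 1) ^ T0 * #|{: col}|) <= _).
    by rewrite ltn_pmul2r ?muln_gt0 ?hx0 ?tot0.
  rewrite mulnA (mulnC (2 ^ j)) mulnC; apply: leq_mul => //.
have : #|Bad| < #|{: col}| by rewrite ltn_pmul2r ?expn_gt0 ?x1 in hlt.
move=> hB.
have : ~~ ([set: col] \subset Bad).
  apply/negP => hs; have h := subset_leq_card hs; rewrite cardsT in h; by have := leq_ltn_trans h hB; rewrite ltnn.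
move=> /subsetPn [chi _ hchi]; exists chi => W cW.
move: hchi; rewrite inE negb_exists => /forallP /(_ W); by rewrite cW eqxx /= negbK.
Qed.

Lemma f_le chi M : 0 < M -> (forall W : {set 'I_n}, #|W| = M -> has_clique k (Gr chi) s W) ->
  f_kst k s s.+1 n <= M.-1.
Proof.
move=> M0 hW.
rewrite /f_kst.
apply: leq_trans (@bigmin_le_term _ _ _ _ (Gr chi) _) _.
  by rewrite Gr_unif Gr_free.
apply/bigmax_leqP => W hnc.
rewrite -ltnS prednK //; rewrite ltnNge; apply/negP => hMW.
have : 0 < #|[set A : {set 'I_n} | A \subset W & #|A| == M]| by rewrite cards_draws bin_gt0.
move=> /card_gt0P [A]; rewrite inE => /andP [sAW /eqP cA].
by move: hnc; rewrite (has_clique_mono sAW (hW A cA)).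
Qed.

Lemma sec_main l : 2 ^ l <= n -> n < 2 ^ l.+1 ->
  exists a, f_kst k s s.+1 n <= a /\
    a ^ (k - 2) <= s ^ (k - 2) + 'C(s, k.-1) * s`! * s ^ s * (r ^ 'C(s, k.-1)) * l.+1.
Proof.
move=> hl hn.
set K := 'C(s, k.-1) * s`! * s ^ s * (r ^ 'C(s, k.-1)).
pose P := fun m => (s <= m) && (K * l.+1 <= m ^ (k - 2)).
have exP : exists m, P m.
  exists (s + K * l.+1); rewrite /P leq_addr /=.
  apply: (leq_trans (leq_addl s _)).
  have d1 : 0 < k - 2 by lia.
  case: (k - 2) d1 => // d _; rewrite expnS; apply: leq_pmulr; rewrite expn_gt0; apply/orP; left; lia.
case: (ex_minnP exP) => M /andP [sM hM] hmin.
have [chi hchi] := good_col sM hM hn.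
have M0 : 0 < M by lia.
exists M.-1; split; first exact: f_le hchi.
case: (ltnP M.-1 s) => hs.
  apply: leq_trans (leq_addr _ _); apply: leq_expb; exact: ltnW.
apply: leq_trans (leq_addl (s ^ (k - 2)) _).
rewrite leqNgt; apply/negP => hlt.
have : M <= M.-1 by apply: hmin; rewrite /P hs /=; exact: ltnW.
lia.
Qed.

End Graph.

Lemma main_aux (k s : nat) (hk : (3 <= k)%N) (hks : (k <= s)%N) :
  exists C : R, (0 < C)%R /\
    forall n : nat, (2 <= n)%N ->
      (INR (f_kst k s s.+1 n) <= C * Rpower (ln (INR n)) (1 / INR (k - 2)))%R.
Proof.
have hd : 0 < k - 2 by lia.
have [C [hC hall]] := final_real (s ^ (k - 2))
   ('C(s, k.-1) * s`! * s ^ s * ((s - k).+2 ^ 'C(s, k.-1))) hd.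
exists C; split => // n hn.
have hn0 : 0 < n by lia.
have hl := trunc_logP (isT : 1 < 2) hn0.
have hl2 := trunc_log_ltn n (isT : 1 < 2).
have [a [ha1 ha2]] := @sec_main n k s hk hks (trunc_log 2 n) hl hl2.
exact: (hall n (trunc_log 2 n) _ a hn hl ha1 ha2).
Qed.
End Aux.

Theorem mainTheorem4 (k s : nat) (hk : (3 <= k)%N) (hks : (k <= s)%N) :
  exists C : R, (0 < C)%R /\
    forall n : nat, (2 <= n)%N ->
      (INR (f_kst k s s.+1 n) <= C * Rpower (ln (INR n)) (1 / INR (k - 2)))%R.
Proof. exact: (Aux.main_aux hk hks). Qed.
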